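(* For $t>0$ and $\alpha>0$ define \[ f_{t,\alpha}(z) \coloneqq \frac{e^{-t/(z+1)}}{(z+1)^{\alpha}},\qquad z\in\mathbb{C}_+ , \] where $(z+1)^{\alpha}$ denotes the principal branch. Then $f_{t,\alpha}\in\mathcal{B}$ for all $t,\alpha>0$. Moreover, for each fixed $\alpha>0$ there exist constants $M>0$ and $t_0>0$ such that \[ \|f_{t,\alpha}\|_{\mathcal{B}_0}\le \frac{M}{t^{\alpha/2}}\qquad\text{for all } t\ge t_0 . \]
   Context: $\mathbb{C}_+=\{\lambda\in\mathbb{C}:\operatorname{Re}\lambda>0\}$. $\mathcal{B}$ denotes the space of all holomorphic functions $f$ on $\mathbb{C}_+$ such that \[ \|f\|_{\mathcal{B}_0}\coloneqq\int_0^\infty \sup_{\eta\in\mathbb{R}}|f'(\xi+i\eta)|\,d\xi<\infty . \] *)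

(* Defs.v *)
From Stdlib Require Import Reals.
From Coquelicot Require Import Coquelicot.

Open Scope R_scope.

Definition Cexp (z : C) : C :=
  (exp (Re z) * cos (Im z), exp (Re z) * sin (Im z)).

(** Principal argument, with values in (-PI, PI]. *)
Definition Carg (z : C) : R :=
  if Rlt_dec 0 (Re z) then atan (Im z / Re z)
  else if Rlt_dec (Re z) 0 then
    (if Rle_dec 0 (Im z) then atan (Im z / Re z) + PI
     else atan (Im z / Re z) - PI)
  else (if Rle_dec 0 (Im z) then PI / 2 else - (PI / 2)).

Definition Clog (z : C) : C := (ln (Cmod z), Carg z).

Definition Cpow (w : C) (a : R) : C := Cexp (RtoC a * Clog w).

Definition f_ta (t alpha : R) (z : C) : C :=
  Cexp (RtoC (- t) / (z + 1)) / Cpow (z + 1) alpha.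

Definition holo_Cplus (f : C -> C) : Prop :=
  forall z : C, 0 < Re z -> @ex_derive C_AbsRing C_NormedModule f z.

(** complex derivative f' (meaningful where f is holomorphic). *)
Definition Cderiv (f : C -> C) (z : C) : C := C_derive f z.

Definition Cmod_ := Cmod.

From mathcomp Require Import all_boot all_algebra all_classical all_reals all_analysis.
From mathcomp Require Import Rstruct Rstruct_topology.

Local Open Scope classical_set_scope.
Local Open Scope ereal_scope.

Definition B0norm (f : C -> C) : \bar R :=
  \int[@lebesgue_measure R]_(xi in `]0%R, +oo[)
     ereal_sup [set (Cmod_ (Cderiv f (xi, eta)))%:E | eta in [set: R]].

Definition inB (f : C -> C) : Prop :=
  holo_Cplus f /\ B0norm f < +oo.

(* Main.v *)
Require Import Defs.
From Stdlib Require Import Reals.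

Module PartA.
From Stdlib Require Import Reals Lra.
From Coquelicot Require Import Coquelicot.
Open Scope R_scope.

Lemma Cmod_le_sum (a b : R) : Cmod (a, b) <= Rabs a + Rabs b.
Proof.
unfold Cmod; simpl.
rewrite <- (sqrt_Rsqr (Rabs a + Rabs b)) by (pose proof (Rabs_pos a); pose proof (Rabs_pos b); lra).
apply sqrt_le_1_alt. unfold Rsqr.
pose proof (Rabs_pos a); pose proof (Rabs_pos b).
replace (a*(a*1)) with (Rabs a * Rabs a) by (rewrite <- Rabs_mult; rewrite Rabs_right; nra).
replace (b*(b*1)) with (Rabs b * Rabs b) by (rewrite <- Rabs_mult; rewrite Rabs_right; nra).
nra.
Qed.

Lemma CR (f : C -> C) (z l : C) :
  differentiable_pt_lim (fun x y => fst (f (x,y))) (fst z) (snd z) (fst l) (- snd l) ->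
  differentiable_pt_lim (fun x y => snd (f (x,y))) (fst z) (snd z) (snd l) (fst l) ->
  is_derive f z l.
Proof.
intros H1 H2. split. apply is_linear_scal_l.
intros x Hx. apply (@is_filter_lim_locally_unique _ (AbsRing_NormedModule C_AbsRing)) in Hx. subst x.
intros eps.
assert (He : 0 < eps / 4) by (destruct eps; simpl; lra).
specialize (H1 (mkposreal _ He)). specialize (H2 (mkposreal _ He)).
destruct z as [z1 z2]. simpl in H1, H2.
destruct H1 as [d1 H1]. destruct H2 as [d2 H2].
exists (mkposreal _ (Rmin_stable_in_posreal d1 d2)).
intros [u v] Hb.
assert (Hu : Rabs (u - z1) < Rmin d1 d2 /\ Rabs (v - z2) < Rmin d1 d2).
{ unfold ball in Hb; simpl in Hb. unfold AbsRing_ball in Hb.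
  change (abs ?x) with (Cmod x) in Hb.
  unfold minus, plus, opp in Hb; simpl in Hb. unfold Cplus, Copp in Hb; simpl in Hb.
  pose proof (Rmax_Cmod (u + - z1, v + - z2)). simpl in H.
  pose proof (Rmax_l (Rabs (u + - z1)) (Rabs (v + - z2))).
  pose proof (Rmax_r (Rabs (u + - z1)) (Rabs (v + - z2))).
  unfold Rminus. lra. }
destruct Hu as [Hu Hv].
specialize (H1 u v ltac:(eapply Rlt_le_trans; [apply Hu| apply Rmin_l]) ltac:(eapply Rlt_le_trans; [apply Hv| apply Rmin_l])).
specialize (H2 u v ltac:(eapply Rlt_le_trans; [apply Hu| apply Rmin_r]) ltac:(eapply Rlt_le_trans; [apply Hv| apply Rmin_r])).
rename H1 into E1, H2 into E2. simpl in E1, E2.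
destruct l as [l1 l2]. simpl in E1, E2.
change (norm ?x) with (Cmod x).
change (@norm C_AbsRing (AbsRing_NormedModule C_AbsRing) ?x) with (Cmod x).
unfold minus, plus, opp, scal; simpl. unfold mult; simpl.
unfold Cplus, Copp, Cmult; simpl.
set (du := u + - z1). set (dv := v + - z2).
eapply Rle_trans. apply Cmod_le_sum.
eapply Rle_trans with (2 * (eps/4 * Rmax (Rabs du) (Rabs dv))).
{ unfold Rminus in E1, E2. fold du dv in E1, E2.
  match goal with |- Rabs ?A + Rabs ?B <= _ =>
    replace A with (fst (f (u, v)) + - fst (f (z1, z2)) + - (l1 * du + - l2 * dv)) by ring;
    replace B with (snd (f (u, v)) + - snd (f (z1, z2)) + - (l2 * du + l1 * dv)) by ring end.
  lra. }
pose proof (Rmax_Cmod (du, dv)). simpl in H.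
assert (0 <= Rmax (Rabs du) (Rabs dv)) by (eapply Rle_trans; [apply Rabs_pos| apply Rmax_l]).
destruct eps as [e ep]; simpl in *. nra.
Qed.

Lemma D_fst1 (g : R -> R) x y l : derivable_pt_lim g x l ->
  differentiable_pt_lim (fun u _ => g u) x y l 0.
Proof. apply differentiable_pt_lim_proj1_0. Qed.

Lemma D_swap f x y lx ly : differentiable_pt_lim f x y lx ly ->
  differentiable_pt_lim (fun u v => f v u) y x ly lx.
Proof.
intros H eps. destruct (H eps) as [d Hd]. exists d. intros u v Hu Hv.
specialize (Hd v u Hv Hu). rewrite Rmax_comm.
replace (f v u - f x y - (ly * (u - y) + lx * (v - x))) with
  (f v u - f x y - (lx * (v - x) + ly * (u - y))) by ring. exact Hd.
Qed.

Lemma D_snd1 (g : R -> R) x y l : derivable_pt_lim g y l ->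
  differentiable_pt_lim (fun _ v => g v) x y 0 l.
Proof. intros H. apply (D_swap (fun u _ => g u)). apply D_fst1. exact H. Qed.

Lemma D_mult2 a b : differentiable_pt_lim (fun u v => u * v) a b b a.
Proof.
intros eps. exists eps. intros u v Hu Hv.
replace (u * v - a * b - (b * (u - a) + a * (v - b))) with ((u - a) * (v - b)) by ring.
rewrite Rabs_mult.
pose proof (Rmax_l (Rabs (u - a)) (Rabs (v - b))).
pose proof (Rabs_pos (u - a)). pose proof (Rabs_pos (v - b)).
destruct eps as [e ep]; simpl in *. nra.
Qed.

Lemma D_plus2 a b : differentiable_pt_lim (fun u v => u + v) a b 1 1.
Proof.
intros eps. exists eps. intros u v Hu Hv.
replace (u + v - (a + b) - (1 * (u - a) + 1 * (v - b))) with 0 by ring.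
rewrite Rabs_R0. apply Rmult_le_pos. destruct eps; simpl; lra.
eapply Rle_trans. apply Rabs_pos. apply Rmax_l.
Qed.

Lemma D_mult f g x y fx fy gx gy :
  differentiable_pt_lim f x y fx fy -> differentiable_pt_lim g x y gx gy ->
  differentiable_pt_lim (fun u v => f u v * g u v) x y
    (g x y * fx + f x y * gx) (g x y * fy + f x y * gy).
Proof.
intros Hf Hg.
apply (differentiable_pt_lim_comp (fun a b => a * b) f g x y (g x y) (f x y)); auto.
apply D_mult2.
Qed.

Lemma D_plus f g x y fx fy gx gy :
  differentiable_pt_lim f x y fx fy -> differentiable_pt_lim g x y gx gy ->
  differentiable_pt_lim (fun u v => f u v + g u v) x y
    (1 * fx + 1 * gx) (1 * fy + 1 * gy).
Proof.
intros Hf Hg.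
apply (differentiable_pt_lim_comp (fun a b => a + b) f g x y 1 1); auto.
apply D_plus2.
Qed.

Lemma D_comp1 (g : R -> R) h x y g' hx hy :
  derivable_pt_lim g (h x y) g' -> differentiable_pt_lim h x y hx hy ->
  differentiable_pt_lim (fun u v => g (h u v)) x y (g' * hx + 0 * hx) (g' * hy + 0 * hy).
Proof.
intros Hg Hh.
apply (differentiable_pt_lim_comp (fun a _ => g a) h h x y g' 0); auto.
apply D_fst1. exact Hg.
Qed.

Lemma D_eq f x y a b a' b' : differentiable_pt_lim f x y a b -> a = a' -> b = b' ->
  differentiable_pt_lim f x y a' b'.
Proof. intros H <- <-. exact H. Qed.

Lemma D_ext f g x y a b : (forall u v, f u v = g u v) ->
  differentiable_pt_lim f x y a b -> differentiable_pt_lim g x y a b.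
Proof.
intros E H. apply differentiable_pt_lim_ext with f; auto.
exists (mkposreal 1 Rlt_0_1). intros; apply E.
Qed.

Lemma is_derive_Cexp (z : C) : is_derive Cexp z (Cexp z).
Proof.
destruct z as [x y].
apply CR; simpl.
- eapply D_eq.
  apply (D_mult (fun u _ => exp u) (fun _ v => cos v)).
  apply D_fst1, derivable_pt_lim_exp. apply D_snd1, derivable_pt_lim_cos.
  unfold Cexp; simpl; ring. unfold Cexp; simpl; ring.
- eapply D_eq.
  apply (D_mult (fun u _ => exp u) (fun _ v => sin v)).
  apply D_fst1, derivable_pt_lim_exp. apply D_snd1, derivable_pt_lim_sin.
  unfold Cexp; simpl; ring. unfold Cexp; simpl; ring.
Qed.

Lemma dl_inv a : a <> 0 -> derivable_pt_lim Rinv a (- / (a * a)).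
Proof.
intros Ha. apply is_derive_Reals. auto_derive. auto. field. auto.
Qed.

Lemma dl_sq a : derivable_pt_lim (fun x => x ^ 2) a (2 * a).
Proof. apply is_derive_Reals. auto_derive. auto. ring. Qed.

Lemma dl_id a : derivable_pt_lim (fun x => x) a 1.
Proof. apply is_derive_Reals. auto_derive. auto. ring. Qed.

Lemma D_r2 x y : differentiable_pt_lim (fun u v => u ^ 2 + v ^ 2) x y
  (1 * (2 * x + 0) + 1 * (0 + 0)) (1 * (0 + 0) + 1 * (0 + 2 * y)).
Proof.
eapply D_eq. apply (D_plus (fun u _ => u ^ 2) (fun _ v => v ^ 2)).
apply D_fst1, dl_sq. apply D_snd1, dl_sq. ring. ring.
Qed.

Ltac fldr H := field; repeat split; try (let HH := fresh in intro HH; apply H; simpl; nra).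

Lemma is_derive_Cinv (w : C) : w <> 0%C -> is_derive Cinv w (- (/ w * / w))%C.
Proof.
intros Hw. destruct w as [x y].
assert (Hr : x ^ 2 + y ^ 2 <> 0).
{ intro H. apply Hw. assert (x = 0 /\ y = 0) as [-> ->] by (split; nra). reflexivity. }
assert (Hr2 : x * (x * 1) + y * (y * 1) <> 0) by (simpl in Hr; exact Hr).
apply CR; simpl.
- eapply D_eq.
  apply (D_mult (fun u _ => u) (fun u v => / (u ^ 2 + v ^ 2))).
  apply D_fst1, dl_id.
  apply (D_comp1 Rinv (fun u v => u ^ 2 + v ^ 2)). apply dl_inv. auto. apply D_r2.
  simpl. fldr Hr. simpl. fldr Hr.
- eapply D_eq.
  apply (D_mult (fun _ v => - v) (fun u v => / (u ^ 2 + v ^ 2))).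
  apply D_snd1. apply is_derive_Reals. auto_derive. auto. reflexivity.
  apply (D_comp1 Rinv (fun u v => u ^ 2 + v ^ 2)). apply dl_inv. auto. apply D_r2.
  simpl. fldr Hr. simpl. fldr Hr.
Qed.

Lemma dl_lnsqrt a : 0 < a -> derivable_pt_lim (fun a => ln (sqrt a)) a (/ (2 * a)).
Proof.
intros Ha. apply is_derive_Reals. auto_derive.
- split; auto. split; auto. apply sqrt_lt_R0; auto.
- pose proof (sqrt_sqrt a (Rlt_le _ _ Ha)). pose proof (sqrt_lt_R0 a Ha).
  field_simplify; [| lra | lra]. rewrite <- H at 2. field. lra.
Qed.

Lemma is_derive_Clog (w : C) : 0 < fst w -> is_derive Clog w (/ w)%C.
Proof.
intros Hw. destruct w as [x y]. simpl in Hw.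
assert (Hr : x ^ 2 + y ^ 2 <> 0) by nra.
assert (Hr' : 0 < x ^ 2 + y ^ 2) by nra.
apply CR; simpl.
- eapply D_eq.
  apply (D_comp1 (fun a => ln (sqrt a)) (fun u v => u ^ 2 + v ^ 2)).
  apply dl_lnsqrt. auto. apply D_r2.
  simpl. fldr Hr. simpl. fldr Hr.
- apply differentiable_pt_lim_ext with (fun u v => atan (v * / u)).
  { exists (mkposreal x Hw). intros u v Hu Hv. simpl in Hu.
    assert (0 < u) by (apply Rabs_def2 in Hu; lra).
    unfold Carg; simpl. destruct (Rlt_dec 0 u); [reflexivity | lra]. }
  eapply D_eq.
  apply (D_comp1 atan (fun u v => v * / u)).
  apply derivable_pt_lim_atan.
  apply (D_mult (fun _ v => v) (fun u _ => / u)).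
  apply D_snd1, dl_id. apply D_fst1, dl_inv. lra.
  simpl. fldr Hr. simpl. fldr Hr.
Qed.

Lemma isd_eq (f : C -> C) z l l' : is_derive f z l -> l = l' -> is_derive f z l'.
Proof. intros H <-; exact H. Qed.

Lemma isd_ext (f g : C -> C) z l : (forall z, f z = g z) -> is_derive f z l -> is_derive g z l.
Proof. intros E H. apply (is_derive_ext f g); auto. Qed.

Lemma isd_conv (f : C -> C) z l : @is_derive C_AbsRing C_NormedModule f z l ->
  @is_derive C_AbsRing (AbsRing_NormedModule C_AbsRing) f z l.
Proof.
intros [[L1 L2 L3] H2]. split.
- split.
  + intros x y. exact (L1 x y).
  + intros k x. exact (L2 k x).
  + destruct L3 as [M [HM HM2]]. exists M. split. exact HM. intros x. exact (HM2 x).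
- intros x Hx eps. exact (H2 x Hx eps).
Qed.

Lemma isd_conv2 (f : C -> C) z l : @is_derive C_AbsRing (AbsRing_NormedModule C_AbsRing) f z l ->
  @is_derive C_AbsRing C_NormedModule f z l.
Proof.
intros [[L1 L2 L3] H2]. split.
- split.
  + intros x y. exact (L1 x y).
  + intros k x. exact (L2 k x).
  + destruct L3 as [M [HM HM2]]. exists M. split. exact HM. intros x. exact (HM2 x).
- intros x Hx eps. exact (H2 x Hx eps).
Qed.

Lemma isd_comp (f g : C -> C) z df dg : is_derive f (g z) df -> is_derive g z dg ->
  is_derive (fun z => f (g z)) z (dg * df)%C.
Proof. intros Hf Hg. exact (is_derive_comp f g z df dg Hf (isd_conv _ _ _ Hg)). Qed.

Lemma isd_shift (z : C) : is_derive (fun z : C => (z + RtoC 1)%C) z (RtoC 1).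
Proof.
apply isd_eq with (plus (@one C_AbsRing) (@zero C_NormedModule)).
apply (is_derive_plus (V := C_NormedModule) (fun z : C => z) (fun _ => RtoC 1)). apply isd_conv2, is_derive_id. apply is_derive_const.
apply injective_projections; simpl; ring.
Qed.

Lemma isd_cmul (c : C) (f : C -> C) z l : is_derive f z l ->
  is_derive (fun z => (c * f z)%C) z (c * l)%C.
Proof.
intros H.
apply isd_eq with (plus (mult (@zero C_AbsRing) (f z)) (mult c l)).
apply isd_conv2. apply (is_derive_mult (fun _ => c) f). apply (@is_derive_const C_AbsRing (AbsRing_NormedModule C_AbsRing)). apply isd_conv; exact H.
intros; apply Cmult_comm.
apply injective_projections; simpl; ring.
Qed.

Lemma isd_sub (f g : C -> C) z lf lg : is_derive f z lf -> is_derive g z lg ->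
  is_derive (fun z => (f z - g z)%C) z (lf - lg)%C.
Proof.
intros Hf Hg. apply isd_eq with (minus lf lg).
apply (is_derive_minus f g). exact Hf. exact Hg.
apply injective_projections; simpl; ring.
Qed.

Lemma exp_le' x y : x <= y -> exp x <= exp y.
Proof. intros H. destruct (Rle_lt_or_eq_dec _ _ H) as [H' | ->]. left; apply exp_increasing; auto. lra. Qed.

Lemma ln_le' x y : 0 < x -> x <= y -> ln x <= ln y.
Proof. intros Hx H. destruct (Rle_lt_or_eq_dec _ _ H) as [H' | ->]. left; apply ln_increasing; auto. lra. Qed.

Lemma expbound u k : 0 < u -> 0 < k -> exp (- u) <= exp (k * ln k - k * ln u).
Proof.
intros Hu Hk. apply exp_le'.
assert (H : ln (u / k) <= u / k).
{ pose proof (exp_ineq1_le (ln (u / k))). rewrite exp_ln in H.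
  lra. apply Rdiv_lt_0_compat; auto. }
unfold Rdiv in H. rewrite ln_mult, ln_Rinv in H; auto.
2: apply Rinv_0_lt_compat; auto.
assert (k * (ln u + - ln k) <= k * (u * / k)) by (apply Rmult_le_compat_l; lra).
replace (k * (u * / k)) with u in H0 by (field; lra). nra.
Qed.

Lemma main_ineq t a x r : 0 < t -> 0 < a -> 1 <= x -> x <= r ->
  exp (- (t * x / r ^ 2) - a * ln r) * (t / r ^ 2 + a / r) <=
  (exp ((a/2+1) * ln (a/2+1)) + a * exp (a/2 * ln (a/2))) *
    exp (- (a/2) * ln t) * exp (- (a/2 + 1) * ln x).
Proof.
intros Ht Ha Hx Hr.
assert (Hx0 : 0 < x) by lra. assert (Hr0 : 0 < r) by lra.
assert (Hr2 : 0 < r ^ 2) by (apply pow_lt; auto).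
assert (Hu : 0 < t * x / r ^ 2) by (apply Rdiv_lt_0_compat; [nra | auto]).
assert (Elu : ln (t * x / r ^ 2) = ln t + ln x - 2 * ln r).
{ unfold Rdiv. rewrite ln_mult, ln_mult, ln_Rinv; auto; try nra.
  replace (r ^ 2) with (r * r) by ring. rewrite ln_mult; auto. ring.
  apply Rinv_0_lt_compat; auto. }
assert (E1 : t / r ^ 2 = exp (ln t - 2 * ln r)).
{ unfold Rminus. rewrite exp_plus. replace (- (2 * ln r)) with (- ln r + - ln r) by ring.
  rewrite exp_plus, exp_ln, <- ln_Rinv, exp_ln; auto. field. lra.
  apply Rinv_0_lt_compat; auto. }
assert (E2 : a / r = a * exp (- ln r)).
{ rewrite <- ln_Rinv, exp_ln; auto. apply Rinv_0_lt_compat; auto. }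
set (b := a / 2). assert (Hb : 0 < b) by (unfold b; lra).
set (u := t * x / r ^ 2). fold u in Elu, Hu.
pose proof (expbound u (b + 1) Hu ltac:(lra)) as B1.
pose proof (expbound u b Hu Hb) as B2.
rewrite Elu in B1, B2.
assert (Hlr : ln x <= ln r) by (apply ln_le'; auto).
rewrite Rmult_plus_distr_l, E1, E2.
replace (- u - a * ln r) with (- u + - (a * ln r)) by ring.
rewrite exp_plus.
replace (a / 2 + 1) with (b + 1) by (unfold b; ring). fold b.
rewrite Rmult_plus_distr_r, Rmult_plus_distr_r.
apply Rplus_le_compat.
- apply Rle_trans with (exp ((b + 1) * ln (b + 1) - (b + 1) * (ln t + ln x - 2 * ln r)) *
     exp (- (a * ln r)) * exp (ln t - 2 * ln r)).
  { apply Rmult_le_compat_r. left; apply exp_pos. apply Rmult_le_compat_r. left; apply exp_pos. exact B1. }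
  rewrite <- !exp_plus. apply exp_le'. unfold b. lra.
- apply Rle_trans with (a * (exp (b * ln b - b * (ln t + ln x - 2 * ln r)) *
     exp (- (a * ln r)) * exp (- ln r))).
  { replace (exp (- u) * exp (- (a * ln r)) * (a * exp (- ln r))) with
     (a * (exp (- u) * exp (- (a * ln r)) * exp (- ln r))) by ring.
    apply Rmult_le_compat_l. lra.
    apply Rmult_le_compat_r. left; apply exp_pos. apply Rmult_le_compat_r. left; apply exp_pos. exact B2. }
  replace (a * exp (b * ln b) * exp (- b * ln t) * exp (- (b + 1) * ln x)) with
    (a * (exp (b * ln b) * exp (- b * ln t) * exp (- (b + 1) * ln x))) by ring.
  apply Rmult_le_compat_l. lra.
  rewrite <- !exp_plus. apply exp_le'. unfold b in *. nra.
Qed.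

Lemma Cexp_sub a b : Cdiv (Cexp a) (Cexp b) = Cexp (Cminus a b).
Proof.
destruct a as [a1 a2], b as [b1 b2].
unfold Cdiv, Cexp, Cinv, Cmult, Cminus, Cplus, Copp; simpl.
assert (HD : exp b1 * cos b2 * (exp b1 * cos b2 * 1) + exp b1 * sin b2 * (exp b1 * sin b2 * 1) = exp b1 * exp b1).
{ pose proof (sin2_cos2 b2). unfold Rsqr in H. nra. }
rewrite HD, exp_plus, exp_Ropp, cos_plus, sin_plus, cos_neg, sin_neg.
pose proof (exp_pos b1).
apply injective_projections; simpl; field; lra.
Qed.

Lemma Cmod_Cexp q : Cmod (Cexp q) = exp (fst q).
Proof.
destruct q as [a b]. unfold Cmod, Cexp; simpl.
replace (exp a * cos b * (exp a * cos b * 1) + exp a * sin b * (exp a * sin b * 1)) with (exp a * exp a).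
apply sqrt_square. left; apply exp_pos.
pose proof (sin2_cos2 b). unfold Rsqr in H. nra.
Qed.

Definition Ef (t a : R) (z : C) : C :=
  Cminus (RtoC (- t) * Cinv (z + RtoC 1)) (RtoC a * Clog (z + RtoC 1)).

Lemma f_ta_eq t a z : f_ta t a z = Cexp (Ef t a z).
Proof. unfold f_ta, Defs.Cpow, Ef. rewrite Cexp_sub. reflexivity. Qed.

Definition Dz (t a : R) (z : C) : C :=
  Cminus (RtoC (- t) * (RtoC 1 * (- (/ (z + RtoC 1) * / (z + RtoC 1)))))
         (RtoC a * (RtoC 1 * / (z + RtoC 1))).

Lemma is_derive_f t a z : 0 < fst z ->
  is_derive (f_ta t a) z (Dz t a z * Cexp (Ef t a z))%C.
Proof.
intros Hz.
apply isd_ext with (fun z => Cexp (Ef t a z)). { intros; symmetry; apply f_ta_eq. }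
apply isd_comp. apply is_derive_Cexp.
unfold Ef, Dz.
apply isd_sub; apply isd_cmul.
- apply (isd_comp Cinv (fun z : C => (z + RtoC 1)%C)). apply is_derive_Cinv.
  intro H. apply (f_equal fst) in H. simpl in H. lra.
  apply isd_shift.
- apply (isd_comp Clog (fun z : C => (z + RtoC 1)%C)). apply is_derive_Clog. simpl. lra.
  apply isd_shift.
Qed.

Definition Kc (a : R) := exp ((a/2+1) * ln (a/2+1)) + a * exp (a/2 * ln (a/2)).

Lemma deriv_bound t a z : 0 < t -> 0 < a -> 0 < fst z ->
  Cmod (Cderiv (f_ta t a) z) <=
  Kc a * exp (- (a/2) * ln t) * exp (- (a/2 + 1) * ln (fst z + 1)).
Proof.
intros Ht Ha Hz.
unfold Cderiv. rewrite (is_C_derive_unique _ _ _ (is_derive_f t a z Hz)).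
rewrite Cmod_mult, Cmod_Cexp.
set (w := (z + RtoC 1)%C).
assert (Hw : w <> 0%C).
{ intro H. apply (f_equal fst) in H. unfold w in H; simpl in H. lra. }
assert (Hx : fst w = fst z + 1) by (unfold w; simpl; ring).
set (r := Cmod w).
assert (Hr : fst w <= r).
{ unfold r. eapply Rle_trans; [| apply re_le_Cmod]. apply Rle_abs. }
assert (Hr2 : r ^ 2 = fst w ^ 2 + snd w ^ 2).
{ unfold r, Cmod. rewrite pow2_sqrt. reflexivity. nra. }
assert (Hr0 : 0 < r) by lra.
assert (HE : fst (Ef t a z) = - (t * fst w / r ^ 2) - a * ln r).
{ unfold Ef. fold w. rewrite Hr2. unfold r. destruct w as [x y]. simpl. field.
  simpl in Hx. nra. }
assert (HD : Cmod (Dz t a z) <= t / r ^ 2 + a / r).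
{ unfold Dz. fold w. unfold Cminus.
  eapply Rle_trans. apply Cmod_triangle. rewrite Cmod_opp.
  rewrite !Cmod_mult, Cmod_opp, Cmod_mult, !Cmod_R, Cmod_inv by exact Hw. fold r.
  rewrite Rabs_R1, Rabs_Ropp, !Rabs_right by lra.
  right. field. lra. }
rewrite HE.
eapply Rle_trans.
{ rewrite Rmult_comm. apply Rmult_le_compat_l. left; apply exp_pos. exact HD. }
rewrite <- Hx. unfold Kc. apply main_ineq; auto. lra.
Qed.

Lemma holo_f t a : holo_Cplus (f_ta t a).
Proof.
intros z Hz. eexists. apply is_derive_f. exact Hz.
Qed.

Lemma Cmod__ge0 z : 0 <= Cmod_ z.
Proof. apply Cmod_ge_0. Qed.

Lemma final_eq t a : 0 < t -> 0 < a ->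
  Kc a * exp (- (a/2) * ln t) / (a/2) = Kc a / (a/2) / Rpower t (a/2).
Proof.
intros Ht Ha. unfold Rpower.
replace (- (a/2) * ln t) with (- (a/2 * ln t)) by ring.
rewrite exp_Ropp. pose proof (exp_pos (a/2 * ln t)). field. split; lra.
Qed.

Lemma Kc_pos a : 0 < a -> 0 < Kc a / (a/2).
Proof.
intros Ha. unfold Kc. apply Rdiv_lt_0_compat; [|lra].
pose proof (exp_pos ((a/2+1) * ln (a/2+1))). pose proof (exp_pos (a/2 * ln (a/2))). nra.
Qed.

End PartA.

From mathcomp Require Import Rstruct Rstruct_topology.
From mathcomp Require Import all_boot all_classical all_reals all_analysis.
From HB Require Import structures.
From mathcomp Require Import all_order all_algebra.
From mathcomp Require Import ring lra measurable_realfun.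
Import Order.TTheory GRing.Theory Num.Theory.
Import numFieldNormedType.Exports.
Local Open Scope classical_set_scope.
Local Open Scope ring_scope.

Section intb.
Context {R : realType}.

Lemma shift_powR_derive (a x : R) : -1 < x ->
  is_derive x 1 (fun y => (y + 1) `^ a) (a * (x + 1) `^ (a - 1)).
Proof.
move=> x1.
have hx : 0 < x + 1 by rewrite -ltrBlDr sub0r.
have := @is_derive1_comp R (@powR R ^~ a) (fun y => y + 1) x (a * (x + 1) `^ (a - 1)) 1.
rewrite mulr1; apply.
  exact: is_derive1_powR.
exact: (@is_derive_shift R x 1 1).
Qed.

Lemma le_int_nm d (T : measurableType d) (mu : {measure set T -> \bar R}) (D : set T)
  (f1 f2 : T -> \bar R) : (forall x, D x -> (0 <= f1 x)%E) ->
  (forall x, D x -> (f1 x <= f2 x)%E) ->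
  (\int[mu]_(x in D) f1 x <= \int[mu]_(x in D) f2 x)%E.
Proof.
move=> f10 f12.
have f20 : forall x, D x -> (0 <= f2 x)%E by move=> x Dx; exact: le_trans (f10 x Dx) (f12 x Dx).
rewrite (ge0_integralE _ f10) (ge0_integralE _ f20) /=.
apply: ereal_sup_le => _ [h /= hf <-]; exists h => //= x.
apply: le_trans (hf x) _.
by rewrite /patch; case: ifP => // /[!inE] Dx; exact: f12.
Qed.

Lemma int_shift_pow (c b : R) : 0 < c -> 0 < b ->
  (\int[lebesgue_measure]_(x in `]0%R, +oo[%classic) ((c * (x + 1) `^ (- (b + 1)))%R)%:E
     = ((c / b)%R)%:E)%E.
Proof.
move=> c0 b0.
set f := fun x : R => c * (x + 1) `^ (- (b + 1)).
set F := fun x : R => (- (c / b)) * (x + 1) `^ (- b).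
have dF : forall x : R, -1 < x -> is_derive x 1 F (f x).
  move=> x x1.
  have := shift_powR_derive (- b) x x1.
  move=> H; rewrite /F /f.
  have -> : c * (x + 1) `^ (- (b + 1)) = - (c / b) * (- b * (x + 1) `^ (- b - 1)).
    rewrite opprD; field; rewrite gt_eqF //.
  rewrite /f in H *.
  exact: is_deriveZ.
have df : forall x, -1 < x -> derivable f x 1.
  move=> x x1; have H := shift_powR_derive (- (b + 1)) x x1.
  apply: ex_derive; rewrite /f; exact: is_deriveZ.
rewrite integral_itv_obnd_cbnd; last first.
  apply/measurable_EFinP; apply: measurable_funTS.
  have mf : measurable_fun setT ((cst c) \* ((@powR R ^~ (-(b+1))) \o (fun x => x + 1))).
    apply: measurable_funM; first exact: measurable_cst.
    apply: measurableT_comp; first exact: measurable_powR.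
    by apply: measurable_funD.
  exact: mf.
rewrite (@ge0_continuous_FTC2y R f F 0 0).
- have h1 : (0 + 1 : R) `^ (- b) = 1 by rewrite add0r /powR oner_eq0 ln1 mulr0 expR0.
  by rewrite /F h1 mulr1 -EFinN opprK add0e.
- move=> x x0; rewrite /f; apply: mulr_ge0; [exact: ltW | exact: powR_ge0].
- apply: continuous_in_subspaceT => x /set_mem; rewrite /= in_itv /= andbT => x0.
  apply: differentiable_continuous; apply/derivable1_diffP; apply: df.
  exact: lt_le_trans (ltrN10 R) x0.
- have Hg : (fun x => b * ln (x + 1)) @ +oo --> +oo.
    apply/cvgryPge => A; near=> x.
    have hx0 : expR (A / b) <= x.
      near: x; apply: nbhs_pinfty_ge; exact: num_real.
    have hx : expR (A / b) <= x + 1 by apply: le_trans hx0 _; rewrite lerDl.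
    have hx1 : 0 < x + 1 by apply: lt_le_trans hx; exact: expR_gt0.
    rewrite -ler_pdivrMl // -(expRK (b^-1 * A)) ler_ln ?posrE ?expR_gt0 //.
    by rewrite mulrC.
  have H1 := cvg_comp _ _ Hg (@cvgr_expR R).
  have Hp : (fun x => (x + 1) `^ (- b)) @ +oo --> 0.
    apply: cvg_trans H1; apply: near_eq_cvg; near=> x.
    have hx0 : 0 < x.
      near: x; apply: nbhs_pinfty_gt; exact: num_real.
    have hx1 : 0 < x + 1 by apply: lt_le_trans hx0 _; rewrite lerDl.
    by rewrite /= /powR gt_eqF // mulNr.
  have := @cvgMl_tmp _ _ _ _ _ (- (c / b)) _ Hp; rewrite mulr0; exact.

- move=> x x0; have H := dF x (lt_trans (ltrN10 R) x0); exact: ex_derive.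
- apply: cvg_at_right_filter.
  apply: differentiable_continuous; apply/derivable1_diffP.
  have H := dF 0 (ltrN10 R); exact: ex_derive.

- move=> x /[!in_itv] /= /andP[x0 _]. rewrite derive1E.
  by have [_ ->] := dF x (lt_trans (ltrN10 R) x0).
Unshelve. all: by end_near. Qed.

End intb.

Lemma B0_bound (t a : R) : (0 < t)%coqR -> (0 < a)%coqR ->
  (B0norm (f_ta t a) <=
    (((PartA.Kc a * Rtrigo_def.exp (- (a/2) * Rpower.ln t)) / (a/2))%coqR)%:E)%E.
Proof.
move=> t0 a0.
set c := (PartA.Kc a * Rtrigo_def.exp (- (a/2) * Rpower.ln t))%coqR.
set b := (a/2)%coqR.
have c0 : 0 < c.
  apply/RltP; rewrite /c /PartA.Kc.
  apply: Rmult_lt_0_compat; last exact: exp_pos.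
  apply: Rplus_lt_0_compat; first exact: exp_pos.
  apply: Rmult_lt_0_compat => //; exact: exp_pos.
have b0 : 0 < b by apply/RltP; rewrite /b; apply: Rdiv_lt_0_compat => //; exact: Rlt_0_2.
have -> : ((c / b)%coqR)%:E = ((c / b)%R)%:E by [].
rewrite -(int_shift_pow c b c0 b0) /B0norm.
apply: le_int_nm.
- move=> x _.
  apply: (le_trans _ (ereal_sup_ubound _)); last first.
    by exists 0%R.
  by rewrite lee_fin; apply/RleP; apply: PartA.Cmod__ge0.
- move=> x /=; rewrite in_itv /= andbT => x0.
  apply: ge_ereal_sup => _ [eta _ <-].
  rewrite lee_fin; apply/RleP.
  apply: Rle_trans.
    apply: (PartA.deriv_bound t a (x, eta)) => //; exact/RltP.
  right.
  have x1 : 0 < x + 1 by apply: lt_le_trans x0 _; rewrite lerDl.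
  rewrite /powR gt_eqF // -RexpE -RlnE /c /b /=.
  reflexivity.
Qed.


Theorem lemma2p3 :
  (forall t alpha : R, (0 < t)%coqR -> (0 < alpha)%coqR -> inB (f_ta t alpha)) /\
  (forall alpha : R, (0 < alpha)%coqR ->
     exists M t0 : R, (0 < M)%coqR /\ (0 < t0)%coqR /\
       forall t : R, (t0 <= t)%coqR ->
         (B0norm (f_ta t alpha) <= ((M / Rpower t (alpha / 2))%coqR)%:E)%E).
Proof.
split.
- move=> t a t0 a0; split; first exact: PartA.holo_f.
  apply: le_lt_trans (B0_bound t a t0 a0) _; exact: ltey.
- move=> a a0.
  exists (PartA.Kc a / (a/2))%coqR, 1%coqR.
  split; first exact: PartA.Kc_pos.
  split; first exact: Rlt_0_1.
  move=> t t1.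
  have t0 : (0 < t)%coqR by exact: (Rlt_le_trans _ _ _ Rlt_0_1 t1).
  apply: le_trans (B0_bound t a t0 a0) _.
  rewrite lee_fin; apply/RleP; right; exact: PartA.final_eq.
Qed.
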